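(* Let $d_1\ge d_2\ge d_3\ge 2$ be integers and let $k=d_2d_3-d_1$. If $k>1$, then $\mathbb{C}^{d_1}\otimes\mathbb{C}^{d_2}\otimes\mathbb{C}^{d_3}$ contains two SLOCC maximal states $|\Phi\rangle,|\Psi\rangle$ that are incomparable under $\le_{\mathrm{SLOCC}}$, i.e. neither $|\Phi\rangle\le_{\mathrm{SLOCC}}|\Psi\rangle$ nor $|\Psi\rangle\le_{\mathrm{SLOCC}}|\Phi\rangle$.
   Context: $|\psi\rangle\le_{\mathrm{SLOCC}}|\phi\rangle$ means $(L_1\otimes L_2\otimes L_3)|\phi\rangle=|\psi\rangle$ for some linear operators $L_i$ on $\mathbb{C}^{d_i}$. A state $|\phi\rangle$ is SLOCC maximal if for every $|\psi\rangle$ in the space, $|\phi\rangle\le_{\mathrm{SLOCC}}|\psi\rangle$ implies $|\psi\rangle\le_{\mathrm{SLOCC}}|\phi\rangle$. *)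

(* Defs.v *)
From HB Require Import structures.
From mathcomp Require Import all_boot all_order all_algebra.
Set Implicit Arguments. Unset Strict Implicit. Unset Printing Implicit Defensive.
Import GRing.Theory Num.Theory.
Local Open Scope ring_scope.

Definition tensor3 (C : numClosedFieldType) (d1 d2 d3 : nat) :=
  {ffun 'I_d1 * 'I_d2 * 'I_d3 -> C}.

Definition tapply (C : numClosedFieldType) (d1 d2 d3 : nat)
  (L1 : 'M[C]_d1) (L2 : 'M[C]_d2) (L3 : 'M[C]_d3)
  (phi : tensor3 C d1 d2 d3) : tensor3 C d1 d2 d3 :=
  [ffun ijk : 'I_d1 * 'I_d2 * 'I_d3 =>
     \sum_(a < d1) \sum_(b < d2) \sum_(c < d3)
       L1 ijk.1.1 a * L2 ijk.1.2 b * L3 ijk.2 c * phi (a, b, c)].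

Definition slocc_le (C : numClosedFieldType) (d1 d2 d3 : nat)
  (psi phi : tensor3 C d1 d2 d3) : Prop :=
  exists (L1 : 'M[C]_d1) (L2 : 'M[C]_d2) (L3 : 'M[C]_d3),
    tapply L1 L2 L3 phi = psi.

Definition slocc_maximal (C : numClosedFieldType) (d1 d2 d3 : nat)
  (phi : tensor3 C d1 d2 d3) : Prop :=
  forall psi : tensor3 C d1 d2 d3, slocc_le phi psi -> slocc_le psi phi.

(* Main.v *)
Require Import Defs.
From HB Require Import structures.
From mathcomp Require Import all_boot all_order all_algebra.
Set Implicit Arguments. Unset Strict Implicit. Unset Printing Implicit Defensive.
Import GRing.Theory Num.Theory.
Local Open Scope ring_scope.
From Stdlib Require Import Lia.
Ltac nlia := intros; try (match goal with |- is_true (_ <= _)%N => apply/leP end); try (match goal with |- is_true (_ == _) => apply/eqP end);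
  repeat match goal with H : is_true (_ <= _)%N |- _ => move/leP: H end;
  repeat match goal with H : is_true (_ == _)%N |- _ => move/eqP: H end;
  repeat match goal with H : @eq nat _ _ |- _ => revert H end;
  rewrite -?plusE -?minusE -?multE; intros; lia.

Lemma sum3 (C : numClosedFieldType) (d1 d2 d3 : nat)
  (F : 'I_d1 -> 'I_d2 -> 'I_d3 -> C) :
  \sum_a \sum_b \sum_c F a b c = \sum_(p : 'I_d1 * 'I_d2 * 'I_d3) F p.1.1 p.1.2 p.2.
Proof.
by rewrite pair_bigA pair_bigA.
Qed.

Lemma prod3 (C : numClosedFieldType) (d1 d2 d3 : nat)
  (A : 'I_d1 -> C) (B : 'I_d2 -> C) (D : 'I_d3 -> C) (x : C) :
  (\sum_a A a) * (\sum_b B b) * (\sum_c D c) * x =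
  \sum_a \sum_b \sum_c A a * B b * D c * x.
Proof.
rewrite -!mulrA big_distrl /=; apply: eq_bigr => a _.
rewrite big_distrl big_distrr /=; apply: eq_bigr => b _.
rewrite big_distrl !big_distrr /=; apply: eq_bigr => c _.
by rewrite !mulrA.
Qed.

Lemma perm7 (C : numClosedFieldType) (a b c d e f g : C) :
  a*b*c*(d*e*f*g) = a*d*(b*e)*(c*f)*g.
Proof.
rewrite -!mulrA; congr (_ * _).
by rewrite (mulrCA c d) (mulrCA b d) (mulrCA c e).
Qed.

Lemma tapplyE (C : numClosedFieldType) (d1 d2 d3 : nat)
  (L1 : 'M[C]_d1) (L2 : 'M[C]_d2) (L3 : 'M[C]_d3) (phi : tensor3 C d1 d2 d3) p :
  tapply L1 L2 L3 phi p =
  \sum_(q : 'I_d1 * 'I_d2 * 'I_d3) L1 p.1.1 q.1.1 * L2 p.1.2 q.1.2 * L3 p.2 q.2 * phi q.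
Proof.
rewrite ffunE /= sum3; apply: eq_bigr => -[[a b] c] _ //.
Qed.

Lemma tapply_comp (C : numClosedFieldType) (d1 d2 d3 : nat)
  (M1 L1 : 'M[C]_d1) (M2 L2 : 'M[C]_d2) (M3 L3 : 'M[C]_d3) (phi : tensor3 C d1 d2 d3) :
  tapply M1 M2 M3 (tapply L1 L2 L3 phi) = tapply (M1 *m L1) (M2 *m L2) (M3 *m L3) phi.
Proof.
apply/ffunP => -[[i j] k].
rewrite tapplyE tapplyE.
under eq_bigr => p _ do rewrite tapplyE big_distrr /=.
rewrite exchange_big /=; apply: eq_bigr => q _.
rewrite !mxE prod3 sum3.
apply: eq_bigr => -[[a b] c] _ /=.
exact: perm7.
Qed.

Lemma tapply1 (C : numClosedFieldType) (d1 d2 d3 : nat) (phi : tensor3 C d1 d2 d3) :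
  tapply 1%:M 1%:M 1%:M phi = phi.
Proof.
apply/ffunP => p; rewrite tapplyE (bigD1 p) //= !mxE !eqxx !mulr1 mul1r.
rewrite big1 ?addr0 // => q Hq.
rewrite !mxE; move: Hq; case: p => [[a b] c]; case: q => [[a' b'] c'] /=.
case: (a =P a') => [<-|]; last by move=> _ _; rewrite mul0r !mul0r.
case: (b =P b') => [<-|]; last by move=> _ _; rewrite mulr0 !mul0r.
case: (c =P c') => [<-|]; last by move=> _ _; rewrite mulr0 !mul0r.
by rewrite eqxx.
Qed.

Lemma sum_kill (C : numClosedFieldType) (I J : finType) (f : I -> C) (g : I -> J -> C)
  (h : J -> C) (F : I -> C) :
  (forall j, \sum_i f i * g i j = 0) -> (forall i, F i = \sum_j g i j * h j) ->
  \sum_i f i * F i = 0.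
Proof.
move=> Hg HF.
under eq_bigr => i _ do rewrite HF big_distrr.
rewrite exchange_big /=; apply: big1 => j _.
under eq_bigr => i _ do rewrite mulrA.
by rewrite -big_distrl /= Hg mul0r.
Qed.

Definition concise1 (C : numClosedFieldType) (d1 d2 d3 : nat) (T : tensor3 C d1 d2 d3) :=
  forall v : 'rV[C]_d1, (forall b c, \sum_a v 0 a * T (a, b, c) = 0) -> v = 0.
Definition concise2 (C : numClosedFieldType) (d1 d2 d3 : nat) (T : tensor3 C d1 d2 d3) :=
  forall v : 'rV[C]_d2, (forall a c, \sum_b v 0 b * T (a, b, c) = 0) -> v = 0.
Definition concise3 (C : numClosedFieldType) (d1 d2 d3 : nat) (T : tensor3 C d1 d2 d3) :=
  forall v : 'rV[C]_d3, (forall a b, \sum_c v 0 c * T (a, b, c) = 0) -> v = 0.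

Lemma ker_rows (C : numClosedFieldType) n (L : 'M[C]_n) :
  (forall v : 'rV_n, v *m L = 0 -> v = 0) -> L \in unitmx.
Proof.
move=> H; rewrite -row_free_unit -kermx_eq0; apply/eqP/row_matrixP => i.
by rewrite row0; apply: H; rewrite -row_mul mulmx_ker row0.
Qed.

Lemma unit1 (C : numClosedFieldType) (d1 d2 d3 : nat)
  (L1 : 'M[C]_d1) (L2 : 'M[C]_d2) (L3 : 'M[C]_d3) (T : tensor3 C d1 d2 d3) :
  concise1 (tapply L1 L2 L3 T) -> L1 \in unitmx.
Proof.
move=> H; apply: ker_rows => v Hv; apply: H => b c.
apply: (@sum_kill _ _ _ _ (fun a q => L1 a q.1.1)
   (fun q => L2 b q.1.2 * (L3 c q.2 * T q))).
  by move=> q; move/matrixP: Hv => /(_ 0 q.1.1); rewrite !mxE.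
by move=> a; rewrite tapplyE; apply: eq_bigr => q _ /=; rewrite !mulrA.
Qed.

Lemma unit2 (C : numClosedFieldType) (d1 d2 d3 : nat)
  (L1 : 'M[C]_d1) (L2 : 'M[C]_d2) (L3 : 'M[C]_d3) (T : tensor3 C d1 d2 d3) :
  concise2 (tapply L1 L2 L3 T) -> L2 \in unitmx.
Proof.
move=> H; apply: ker_rows => v Hv; apply: H => a c.
apply: (@sum_kill _ _ _ _ (fun b q => L2 b q.1.2)
   (fun q => L1 a q.1.1 * (L3 c q.2 * T q))).
  by move=> q; move/matrixP: Hv => /(_ 0 q.1.2); rewrite !mxE.
move=> b; rewrite tapplyE; apply: eq_bigr => q _ /=.
by rewrite -!mulrA (mulrCA (L1 a q.1.1)).
Qed.

Lemma unit3 (C : numClosedFieldType) (d1 d2 d3 : nat)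
  (L1 : 'M[C]_d1) (L2 : 'M[C]_d2) (L3 : 'M[C]_d3) (T : tensor3 C d1 d2 d3) :
  concise3 (tapply L1 L2 L3 T) -> L3 \in unitmx.
Proof.
move=> H; apply: ker_rows => v Hv; apply: H => a b.
apply: (@sum_kill _ _ _ _ (fun c q => L3 c q.2)
   (fun q => L1 a q.1.1 * (L2 b q.1.2 * T q))).
  by move=> q; move/matrixP: Hv => /(_ 0 q.2); rewrite !mxE.
move=> c; rewrite tapplyE; apply: eq_bigr => q _ /=.
by rewrite -!mulrA (mulrCA (L2 b q.1.2)) (mulrCA (L1 a q.1.1)).
Qed.

Lemma concise_maximal (C : numClosedFieldType) (d1 d2 d3 : nat) (T : tensor3 C d1 d2 d3) :
  concise1 T -> concise2 T -> concise3 T -> slocc_maximal T.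
Proof.
move=> c1 c2 c3 psi [L1 [L2 [L3 E]]].
rewrite -E in c1 c2 c3.
exists (invmx L1), (invmx L2), (invmx L3).
by rewrite -E tapply_comp !mulVmx ?tapply1 //; [apply: unit3 c3|apply: unit2 c2|apply: unit1 c1].
Qed.

Lemma sum_single (C : numClosedFieldType) (I : finType) (F : I -> C) i0 :
  (forall i, i != i0 -> F i = 0) -> \sum_i F i = F i0.
Proof. by move=> H; rewrite (bigD1 i0) //= big1 ?addr0 // => i /H. Qed.

Lemma modfix (b s d : nat) : (0 < d)%N -> (s < d)%N -> ((b + (s + (d - b %% d)) %% d) %% d = s)%N.
Proof.
move=> d0 sd; rewrite modnDmr {1}(divn_eq b d) -addnA (addnCA (b %% d)%N).
rewrite subnKC ?(ltnW (ltn_pmod b d0)) // modnMDl modnDr modn_small //.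
Qed.

Definition Phi (C : numClosedFieldType) (d1 d2 d3 : nat) : tensor3 C d1 d2 d3 :=
  [ffun p : 'I_d1 * 'I_d2 * 'I_d3 => ((((p.1.2 + p.2) %% d3) * d2 + p.1.2 == p.1.1 + (d2 * d3 - d1))%N)%:R].

Lemma Phi_c1 (C : numClosedFieldType) (d1 d2 d3 : nat) :
  (2 <= d3)%N -> (d3 <= d2)%N -> (d2 <= d1)%N -> (1 < d2 * d3 - d1)%N ->
  concise1 (Phi C d1 d2 d3).
Proof.
move=> H3 H32 H21 Hk v H; apply/rowP => a0; rewrite mxE.
have d2p : (0 < d2)%N by nlia.
have d3p : (0 < d3)%N by nlia.
set n := (a0 + (d2 * d3 - d1))%N.
have nlt : (n < d2 * d3)%N.
  have := ltn_ord a0; rewrite /n. nlia.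
have slt : (n %/ d2 < d3)%N by rewrite ltn_divLR // mulnC.
pose b := Ordinal (ltn_pmod n d2p).
pose c := Ordinal (ltn_pmod (n %/ d2 + (d3 - b %% d3))%N d3p).
have key : (((b + c) %% d3) * d2 + b = n)%N.
  by rewrite /= modfix // [RHS](divn_eq n d2).
have := H b c; rewrite (sum_single (i0 := a0)).
  by rewrite ffunE /= key /n eqxx mulr1.
move=> a Ha; rewrite ffunE /= key.
suff -> : (n == a + (d2 * d3 - d1))%N = false by rewrite mulr0.
by apply/negbTE; rewrite /n eqn_add2r; apply: contra Ha => /eqP E; apply/eqP/val_inj.
Qed.

Lemma mod_last (b d : nat) : (0 < d)%N -> ((b + (d - 1 - b %% d)) %% d = d - 1)%N.
Proof.
move=> d0; rewrite {1}(divn_eq b d) -addnA.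
have r : (b %% d < d)%N by rewrite ltn_pmod.
have -> : (b %% d + (d - 1 - b %% d) = d - 1)%N by nlia.
rewrite modnMDl modn_small //; nlia.
Qed.

Lemma mulD_eq (x y b b' d : nat) : (b < d)%N -> (b' < d)%N ->
  (x * d + b = y * d + b')%N -> x = y /\ b = b'.
Proof.
move=> bd b'd E.
have Eb : b = b'.
  by have := congr1 (modn^~ d) E; rewrite /= !modnMDl !modn_small.
split=> //; move: E; rewrite Eb => /addIn /eqP; rewrite eqn_pmul2r; [by move/eqP|nlia].
Qed.

Lemma Phi_c2 (C : numClosedFieldType) (d1 d2 d3 : nat) :
  (2 <= d3)%N -> (d3 <= d2)%N -> (d2 <= d1)%N -> (1 < d2 * d3 - d1)%N ->
  concise2 (Phi C d1 d2 d3).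
Proof.
move=> H3 H32 H21 Hk v H; apply/rowP => b0; rewrite mxE.
have d2p : (0 < d2)%N by nlia.
have d3p : (0 < d3)%N by nlia.
have e : ((d3 - 1) * d2 + d2 = d2 * d3)%N.
  by rewrite mulnBl mul1n subnK ?leq_pmull // mulnC.
have c0lt : (d3 - 1 - b0 %% d3 < d3)%N by nlia.
pose c0 := Ordinal c0lt.
have alt : ((d3 - 1) * d2 + b0 - (d2 * d3 - d1) < d1)%N.
  have := ltn_ord b0; nlia.
pose a := Ordinal alt.
have ak : (a + (d2 * d3 - d1) = (d3 - 1) * d2 + b0)%N.
  rewrite /=; have := ltn_ord b0; nlia.
have := H a c0; rewrite (sum_single (i0 := b0)).
  by rewrite ffunE /= ak mod_last // eqxx mulr1.
move=> b Hb; rewrite ffunE /= ak.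
case: eqP; last by rewrite mulr0.
by move/mulD_eq => /(_ (ltn_ord b) (ltn_ord b0)) [_ E]; move: Hb; rewrite -(inj_eq val_inj) /= E eqxx.
Qed.

Lemma Phi_c3 (C : numClosedFieldType) (d1 d2 d3 : nat) :
  (2 <= d3)%N -> (d3 <= d2)%N -> (d2 <= d1)%N -> (1 < d2 * d3 - d1)%N ->
  concise3 (Phi C d1 d2 d3).
Proof.
move=> H3 H32 H21 Hk v H; apply/rowP => c0; rewrite mxE.
have d2p : (0 < d2)%N by nlia.
have d3p : (0 < d3)%N by nlia.
have e : ((d3 - 1) * d2 + d2 = d2 * d3)%N.
  by rewrite mulnBl mul1n subnK ?leq_pmull // mulnC.
have blt : (d3 - 1 - c0 < d2)%N by have := ltn_ord c0; nlia.
pose b := Ordinal blt.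
have alt : ((d3 - 1) * d2 + b - (d2 * d3 - d1) < d1)%N.
  have := ltn_ord b; nlia.
pose a := Ordinal alt.
have ak : (a + (d2 * d3 - d1) = (d3 - 1) * d2 + b)%N.
  rewrite /=; have := ltn_ord b; nlia.
have bc0 : ((b + c0) %% d3 = d3 - 1)%N.
  rewrite /= modn_small; have := ltn_ord c0; nlia.
have := H a b; rewrite (sum_single (i0 := c0)).
  by rewrite ffunE /= ak bc0 eqxx mulr1.
move=> c Hc; rewrite ffunE /= ak.
case: eqP; last by rewrite mulr0.
move/mulD_eq => /(_ (ltn_ord b) (ltn_ord b)) [E _].
move: Hc; rewrite -(inj_eq val_inj) /=.
have : ((b + c) == (b + c0) %[mod d3])%N by rewrite E bc0.
by rewrite eqn_modDl !modn_small // => ->.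
Qed.

Lemma Phi_zero (C : numClosedFieldType) (d1 d2 d3 : nat) (b : 'I_d2) (c : 'I_d3) :
  (b < d2 * d3 - d1)%N -> ((b + c) %% d3 = 0)%N -> forall a, Phi C d1 d2 d3 (a, b, c) = 0.
Proof.
move=> bk bc a; rewrite ffunE /= bc mul0n add0n.
case: eqP => // E; exfalso; move: bk; rewrite E; nlia.
Qed.

Definition Psi (C : numClosedFieldType) (d1 d2 d3 : nat) : tensor3 C d1 d2 d3 :=
  [ffun p : 'I_d1 * 'I_d2 * 'I_d3 =>
    (((p.2 : nat) * d2 + p.1.2 == p.1.1)%N)%:R +
    (((p.1.1 : nat) == 0%N) && ((p.1.2 : nat) == p.2) && (0 < p.2)%N)%:R].

Lemma PsiE (C : numClosedFieldType) (d1 d2 d3 : nat) a b c :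
  Psi C d1 d2 d3 (a, b, c) =
    (((c : nat) * d2 + b == a)%N)%:R + (((a : nat) == 0%N) && ((b : nat) == c) && (0 < c)%N)%:R.
Proof. by rewrite ffunE. Qed.

Lemma Psi_c1 (C : numClosedFieldType) (d1 d2 d3 : nat) :
  (2 <= d3)%N -> (d3 <= d2)%N -> (d2 <= d1)%N -> (1 < d2 * d3 - d1)%N ->
  concise1 (Psi C d1 d2 d3).
Proof.
move=> H3 H32 H21 Hk v H.
have d2p : (0 < d2)%N by nlia.
have d3p : (0 < d3)%N by nlia.
have d1p : (0 < d1)%N by nlia.
have v0 : forall a : 'I_d1, (a : nat) = 0%N -> v 0 a = 0.
  move=> a a0.
  have := H (Ordinal d2p) (Ordinal d3p).
  rewrite (sum_single (i0 := a)).
    by rewrite PsiE /= a0 /= addr0 mulr1.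
  move=> a' Ha'; rewrite PsiE /= andbF addr0.
  case: eqP; last by rewrite mulr0.
  by move=> E; move: Ha'; rewrite -(inj_eq val_inj) /= a0 -E eqxx.
apply/rowP => a0; rewrite mxE.
have clt : (a0 %/ d2 < d3)%N.
  rewrite ltn_divLR // mulnC; have := ltn_ord a0; nlia.
pose b := Ordinal (ltn_pmod a0 d2p).
pose c := Ordinal clt.
have := H b c.
under eq_bigr => a _ do rewrite PsiE mulrDr.
rewrite big_split /=.
rewrite [X in _ + X]big1; last first.
  move=> a _; case: (eqVneq (a : nat) 0%N) => [/v0 ->|]; first by rewrite mul0r.
  by move=> _; rewrite mulr0.
rewrite addr0 (sum_single (i0 := a0)).
  by rewrite /= -divn_eq eqxx mulr1.
move=> a Ha; rewrite /= -divn_eq.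
case: eqP; last by rewrite mulr0.
by move=> E; move: Ha; rewrite -(inj_eq val_inj) /= E eqxx.
Qed.

Lemma Psi_c2 (C : numClosedFieldType) (d1 d2 d3 : nat) :
  (2 <= d3)%N -> (d3 <= d2)%N -> (d2 <= d1)%N -> (1 < d2 * d3 - d1)%N ->
  concise2 (Psi C d1 d2 d3).
Proof.
move=> H3 H32 H21 Hk v H.
have d3p : (0 < d3)%N by nlia.
apply/rowP => b0; rewrite mxE.
have alt : (b0 < d1)%N by have := ltn_ord b0; nlia.
have := H (Ordinal alt) (Ordinal d3p).
rewrite (sum_single (i0 := b0)).
  by rewrite PsiE /= eqxx andbF addr0 mulr1.
move=> b Hb; rewrite PsiE /= andbF addr0.
case: eqP; last by rewrite mulr0.
by move=> E; move: Hb; rewrite -(inj_eq val_inj) /= -E mul0n add0n eqxx.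
Qed.

Lemma Psi_c3 (C : numClosedFieldType) (d1 d2 d3 : nat) :
  (2 <= d3)%N -> (d3 <= d2)%N -> (d2 <= d1)%N -> (1 < d2 * d3 - d1)%N ->
  concise3 (Psi C d1 d2 d3).
Proof.
move=> H3 H32 H21 Hk v H.
have d2p : (0 < d2)%N by nlia.
have d1p : (0 < d1)%N by nlia.
apply/rowP => c0; rewrite mxE.
case: (posnP c0) => [c00|c0p].
  have := H (Ordinal d1p) (Ordinal d2p).
  rewrite (sum_single (i0 := c0)).
    by rewrite PsiE /= c00 /= addr0 mulr1.
  move=> c Hc.
  have cn : (c : nat) != 0%N by move: Hc; rewrite -(inj_eq val_inj) /= c00.
  rewrite PsiE /= addn0 muln_eq0 (negbTE cn) (negbTE (lt0n_neq0 d2p)) eq_sym (negbTE cn) /=.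
  by rewrite addr0 mulr0.
have blt : (c0 < d2)%N by have := ltn_ord c0; nlia.
have := H (Ordinal d1p) (Ordinal blt).
rewrite (sum_single (i0 := c0)).
  rewrite PsiE /= eqxx c0p /=.
  have -> : ((c0 * d2 + c0 == 0)%N) = false by apply/negbTE/eqP; nlia.
  by rewrite add0r mulr1.
move=> c Hc; rewrite PsiE /=.
have -> : ((c * d2 + c0 == 0)%N) = false by apply/negbTE/eqP; nlia.
have -> : ((c0 : nat) == c) = false.
  by apply/negbTE; move: Hc; rewrite -(inj_eq val_inj) /= eq_sym.
by rewrite add0r mulr0.
Qed.

Lemma Psi_cell (C : numClosedFieldType) (d1 d2 d3 : nat) (x : 'I_d2 -> C) (z : 'I_d3 -> C) :
  (forall a, \sum_b \sum_c x b * z c * Psi C d1 d2 d3 (a, b, c) = 0) ->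
  forall (b : 'I_d2) (j : 'I_d3), (j * d2 + b != 0)%N -> (j * d2 + b < d1)%N ->
  x b * z j = 0.
Proof.
move=> H b j nz lt.
have := H (Ordinal lt); rewrite (sum_single (i0 := b)).
  rewrite (sum_single (i0 := j)).
    by rewrite PsiE /= eqxx (negbTE nz) /= addr0 mulr1.
  move=> c Hc; rewrite PsiE /= (negbTE nz) /= addr0.
  case: eqP; last by rewrite mulr0.
  move/mulD_eq => /(_ (ltn_ord b) (ltn_ord b)) [E _].
  by move: Hc; rewrite -(inj_eq val_inj) /= E eqxx.
move=> b' Hb; apply: big1 => c _; rewrite PsiE /= (negbTE nz) /= addr0.
case: eqP; last by rewrite mulr0.
move/mulD_eq => /(_ (ltn_ord b') (ltn_ord b)) [_ E].
by move: Hb; rewrite -(inj_eq val_inj) /= E eqxx.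
Qed.

Lemma Psi_sing (C : numClosedFieldType) (d1 d2 d3 : nat) (x : 'I_d2 -> C) (z : 'I_d3 -> C)
  (b1 : 'I_d2) :
  x b1 != 0 ->
  (forall a, \sum_b \sum_c x b * z c * Psi C d1 d2 d3 (a, b, c) = 0) ->
  forall j : 'I_d3, (j.+1 * d2 <= d1)%N -> z j = 0.
Proof.
move=> xb1 H j jd.
have cellz : forall b : 'I_d2, x b != 0 -> (j * d2 + b != 0)%N -> z j = 0.
  move=> b xb nz; have := Psi_cell H nz.
  have lt : (j * d2 + b < d1)%N.
    by move: jd; rewrite mulSn; have := ltn_ord b; nlia.
  by move/(_ lt)/eqP; rewrite mulf_eq0 (negbTE xb) /= => /eqP.
case: (eqVneq (j * d2 + b1)%N 0%N) => [E|]; last exact: cellz.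
have d2p : (0 < d2)%N := leq_ltn_trans (leq0n b1) (ltn_ord b1).
have j0 : (j : nat) = 0%N.
  by move: E => /eqP; rewrite addn_eq0 muln_eq0 (negbTE (lt0n_neq0 d2p)) orbF => /andP [/eqP].
have b10 : (b1 : nat) = 0%N by move: E => /eqP; rewrite addn_eq0 => /andP [_ /eqP].
case: (boolP [exists c : 'I_d2, (0 < c)%N && (x c != 0)]).
  case/existsP => c /andP [cp xc]; apply: (cellz c xc).
  by apply/eqP; nlia.
rewrite negb_exists => /forallP Hx.
have d1p : (0 < d1)%N by move: jd; rewrite mulSn; have := ltn_ord b1; nlia.
have := H (Ordinal d1p); rewrite (sum_single (i0 := b1)).
  rewrite (sum_single (i0 := j)).
    rewrite PsiE /= j0 b10 eqxx /= addr0 mulr1 => /eqP.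
    by rewrite mulf_eq0 (negbTE xb1) /= => /eqP.
  move=> c Hc; rewrite PsiE /= b10 addn0 eq_sym andbC.
  have cn : (c : nat) != 0%N by move: Hc; rewrite -(inj_eq val_inj) /= j0.
  by rewrite !(eq_sym 0%N) muln_eq0 (negbTE cn) /= andbF (negbTE (lt0n_neq0 d2p)) addr0 mulr0.
move=> b Hb; apply: big1 => c _.
have : ~~ ((0 < b)%N && (x b != 0)) by apply: Hx.
have bp : (0 < b)%N by rewrite lt0n; move: Hb; rewrite -(inj_eq val_inj) /= b10.
by rewrite bp /= negbK => /eqP ->; rewrite !mul0r.
Qed.

Lemma unit_row (C : numClosedFieldType) n (A : 'M[C]_n) (i : 'I_n) :
  A \in unitmx -> (forall j, A i j = 0) -> False.
Proof.
move=> uA H.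
have r0 : delta_mx 0 i *m A = 0 :> 'rV_n.
  by apply/rowP => j; rewrite -rowE !mxE H.
have := congr1 (mulmx^~ (invmx A)) r0; rewrite /= mulmxK // mul0mx => /matrixP /(_ 0 i).
by rewrite !mxE !eqxx /= => /eqP; rewrite oner_eq0.
Qed.

Lemma unit_col (C : numClosedFieldType) n (A : 'M[C]_n) (j : 'I_n) :
  A \in unitmx -> (forall i, A i j = 0) -> False.
Proof.
move=> uA H; apply: (@unit_row _ _ A^T j); first by rewrite unitmx_tr.
by move=> i; rewrite mxE.
Qed.

Lemma witness_col (C : numClosedFieldType) (d1 d2 d3 : nat)
  (M1 : 'M[C]_d1) (M2 : 'M[C]_d2) (M3 : 'M[C]_d3) (b0 : 'I_d2) (c0 : 'I_d3) :
  M1 \in unitmx -> M2 \in unitmx ->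
  (forall a, tapply M1 M2 M3 (Psi C d1 d2 d3) (a, b0, c0) = 0) ->
  forall j : 'I_d3, (j.+1 * d2 <= d1)%N -> M3 c0 j = 0.
Proof.
move=> u1 u2 H.
pose y a' := \sum_b \sum_c M2 b0 b * M3 c0 c * Psi C d1 d2 d3 (a', b, c).
have Hy : forall a, \sum_a' M1 a a' * y a' = 0.
  move=> a; rewrite -[RHS](H a) ffunE /=; apply: eq_bigr => a' _.
  rewrite /y big_distrr; apply: eq_bigr => b _.
  rewrite big_distrr; apply: eq_bigr => c _ /=; by rewrite !mulrA.
have y0 : forall a', y a' = 0.
  pose Y := \col_a' y a'.
  have MY : M1 *m Y = 0 by apply/colP => a; rewrite !mxE -[RHS](Hy a); apply: eq_bigr => a' _; rewrite mxE.
  move=> a'; have := mulKmx u1 Y; rewrite MY mulmx0 => /colP /(_ a').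
  by rewrite !mxE.
case: (boolP [exists b, M2 b0 b != 0]) => [/existsP [b1 nz]|].
  by apply: (@Psi_sing _ d1 d2 d3 (fun b => M2 b0 b) (fun c => M3 c0 c) b1 nz) => a; apply: y0.
rewrite negb_exists => /forallP Hn; exfalso; apply: (unit_row u2 (i := b0)) => j.
by apply/eqP; have := Hn j; rewrite negbK.
Qed.

Lemma scenario (C : numClosedFieldType) (d1 d2 d3 : nat) :
  (2 <= d3)%N -> (d3 <= d2)%N -> (d2 <= d1)%N -> (1 < d2 * d3 - d1)%N ->
  forall (M1 : 'M[C]_d1) (M2 : 'M[C]_d2) (M3 : 'M[C]_d3),
  M1 \in unitmx -> M2 \in unitmx -> M3 \in unitmx ->
  tapply M1 M2 M3 (Psi C d1 d2 d3) = Phi C d1 d2 d3 -> False.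
Proof.
move=> H3 H32 H21 Hk M1 M2 M3 u1 u2 u3 E.
have d2p : (0 < d2)%N by nlia.
have d3p : (0 < d3)%N by nlia.
have wit : forall (b0 : 'I_d2) (c0 : 'I_d3), (b0 < d2 * d3 - d1)%N -> ((b0 + c0) %% d3 = 0)%N ->
    forall j : 'I_d3, (j.+1 * d2 <= d1)%N -> M3 c0 j = 0.
  move=> b0 c0 bk bc; apply: (witness_col (b0 := b0) u1 u2) => a.
  by rewrite E; apply: Phi_zero.
case: (leqP d3 (d2 * d3 - d1)) => hk.
  apply: (unit_col u3 (j := Ordinal d3p)) => c0.
  have blt : ((d3 - c0) %% d3 < d2)%N by apply: leq_trans (ltn_pmod _ d3p) H32.
  apply: (wit (Ordinal blt)) => /=.
  - by apply: leq_trans (ltn_pmod _ d3p) hk.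
  - by rewrite modnDml subnK ?modnn // ltnW.
  - by rewrite mul1n.
have d21 : (1 < d2)%N by nlia.
have e : ((d3 - 1) * d2 + d2 = d2 * d3)%N.
  by rewrite mulnBl mul1n subnK ?leq_pmull // mulnC.
have jb : forall j : 'I_d3, (j < d3 - 1)%N -> (j.+1 * d2 <= d1)%N.
  move=> j jl; have : (j.+1 * d2 <= (d3 - 1) * d2)%N by rewrite leq_mul2r jl orbT.
  nlia.
have Llt : (d3 - 1 < d3)%N by nlia.
pose L := Ordinal Llt.
pose z0 := Ordinal d3p.
have r0 : forall j : 'I_d3, (j < d3 - 1)%N -> M3 z0 j = 0.
  move=> j jl; apply: (wit (Ordinal d2p)) => //=; last exact: jb.
    exact: ltn_trans Hk.
  by rewrite mod0n.
have rL : forall j : 'I_d3, (j < d3 - 1)%N -> M3 L j = 0.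
  move=> j jl; apply: (wit (Ordinal d21)) => //=; last exact: jb.
  by rewrite subnKC ?modnn //; nlia.
pose v := M3 L L *: delta_mx 0 z0 - M3 z0 L *: delta_mx 0 L : 'rV[C]_d3.
have vM : v *m M3 = 0.
  apply/rowP => j; rewrite mulmxBl -!scalemxAl -!rowE !mxE.
  case: (ltnP j (d3 - 1)) => jl; first by rewrite (r0 j jl) (rL j jl) !mulr0 subrr.
  have -> : j = L by apply/val_inj; rewrite /L /=; have := ltn_ord j; nlia.
  by rewrite mulrC subrr.
have v0 : v = 0.
  by have := congr1 (mulmx^~ (invmx M3)) vM; rewrite /= mulmxK // mul0mx.
have zL : (z0 == L) = false by apply/negbTE; rewrite -(inj_eq val_inj) /=; apply/eqP; nlia.
have M0L : M3 z0 L = 0.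
  move/rowP: v0 => /(_ L); rewrite !mxE !eqxx /= eq_sym zL /= mulr0 mulr1 sub0r => /eqP.
  by rewrite oppr_eq0 => /eqP.
apply: (unit_row u3 (i := z0)) => j.
case: (ltnP j (d3 - 1)) => jl; first exact: r0.
have -> : j = L by apply/val_inj; rewrite /L /=; have := ltn_ord j; nlia.
exact: M0L.
Qed.

Theorem mainTheorem5 (C : numClosedFieldType) (d1 d2 d3 : nat) :
  (2 <= d3)%N -> (d3 <= d2)%N -> (d2 <= d1)%N ->
  (1 < d2 * d3 - d1)%N ->
  exists Phi Psi : tensor3 C d1 d2 d3,
    [/\ slocc_maximal Phi, slocc_maximal Psi,
        ~ slocc_le Phi Psi & ~ slocc_le Psi Phi].
Proof.
move=> H3 H32 H21 Hk.
have p1 := Phi_c1 (C := C) H3 H32 H21 Hk; have p2 := Phi_c2 (C := C) H3 H32 H21 Hk.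
have p3 := Phi_c3 (C := C) H3 H32 H21 Hk.
have q1 := Psi_c1 (C := C) H3 H32 H21 Hk; have q2 := Psi_c2 (C := C) H3 H32 H21 Hk.
have q3 := Psi_c3 (C := C) H3 H32 H21 Hk.
exists (Phi C d1 d2 d3), (Psi C d1 d2 d3); split.
- exact: concise_maximal.
- exact: concise_maximal.
- move=> [L1 [L2 [L3 E]]].
  rewrite -E in p1 p2 p3.
  exact: (scenario H3 H32 H21 Hk (unit1 p1) (unit2 p2) (unit3 p3) E).
- move=> [L1 [L2 [L3 E]]].
  rewrite -E in q1 q2 q3.
  have u1 := unit1 q1; have u2 := unit2 q2; have u3 := unit3 q3.
  apply: (scenario H3 H32 H21 Hk (M1 := invmx L1) (M2 := invmx L2) (M3 := invmx L3));
    rewrite ?unitmx_inv //.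
  by rewrite -E tapply_comp !mulVmx // tapply1.
Qed.
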